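(* Assume $\alpha\neq0$ and $w=\tfrac12(s+t)\notin\mathbb{Z}$. Then for every positive integer $n$, every $u\in\mathbb{C}$ and all $a,c\in\mathbb{Z}$, each of the two sets $$\{\psi^{(n)}(u)^a_b\}_{b\in\{a-n+2j:\,j=0,1,\dots,n\}},\qquad\{\psi^{(n)}(u)^b_c\}_{b\in\{c-n+2j:\,j=0,1,\dots,n\}}$$ is a linearly independent subset of $(\mathbb{C}^2)^{\otimes n}$.
   Context: Fix $\alpha,s,t\in\mathbb{C}$. $\mathbb{C}^2$ has basis $e_1,e_2$; vectors are columns of coordinates. For integers $l$ define $\psi^{(1)}(u)^l_{l+1}=\begin{pmatrix}1\\ \alpha(u-l-t)\end{pmatrix}$, $\psi^{(1)}(u)^l_{l-1}=\begin{pmatrix}1\\ \alpha(u+l+s)\end{pmatrix}$, $\psi^{(1)}(u)^a_b=0$ if $|a-b|\neq1$. $\Pi_{1\ldots n}$ is the symmetrizer on $(\mathbb{C}^2)^{\otimes n}$, $\Pi_{1\ldots n}e_{i_1}\otimes\cdots\otimes e_{i_n}=\frac1{n!}\sum_{\sigma\in S_n}e_{i_{\sigma(1)}}\otimes\cdots\otimes e_{i_{\sigma(n)}}$. For $a,b\in\mathbb{Z}$ the fused intertwining vector is $\psi^{(n)}(u)^a_b=\Pi_{1\ldots n}\,\psi^{(1)}(u+n-1)^{c_0}_{c_1}\otimes\cdots\otimes\psi^{(1)}(u+1)^{c_{n-2}}_{c_{n-1}}\otimes\psi^{(1)}(u)^{c_{n-1}}_{c_n}$, with $c_0=a$, $c_n=b$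 and any integers $c_1,\dots,c_{n-1}$ with $|c_{i+1}-c_i|=1$ (the result does not depend on this choice); it is $0$ if $b-a\notin\{-n,-n+2,\dots,n\}$. *)

(* Defs.v *)
(* complex numbers C = R[i] over an arbitrary realType R
   (real_closed's [complex R]); with R = Stdlib's reals this is literally C. *)
From mathcomp Require Import all_boot all_algebra all_fingroup complex reals.

Set Implicit Arguments.
Unset Strict Implicit.
Unset Printing Implicit Defensive.

Import GRing.Theory.
Local Open Scope ring_scope.

Section Fused.
Variable R : realType.
Local Notation C := (R[i]).

(* A vector of C^2 in coordinates w.r.t. (e_1, e_2) : index 0 <-> e_1, 1 <-> e_2. *)
Definition vec2 := 'I_2 -> C.

(* An element of (C^2)^{\otimes n} in coordinates w.r.t. the basis
   e_{i_1} (x) ... (x) e_{i_n}, the multi-index being idx : {ffun 'I_n -> 'I_2}. *)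
Definition tensor (n : nat) := {ffun 'I_n -> 'I_2} -> C.

Definition pure_tensor (n : nat) (v : 'I_n -> vec2) : tensor n :=
  fun idx => \prod_(k < n) v k (idx k).

(* The symmetrizer Pi_{1..n}: on basis vectors
   e_{i_1}(x)..(x)e_{i_n} |-> 1/n! sum_sigma e_{i_sigma(1)}(x)..(x)e_{i_sigma(n)},
   extended linearly; in coordinates (Pi T)(j) = 1/n! sum_sigma T(j o sigma). *)
Definition symmetrizer (n : nat) (T : tensor n) : tensor n :=
  fun idx => (n`!%:R)^-1 * \sum_(sigma : 'S_n) T [ffun k => idx (sigma k)].

Definition psi1 (alpha s t u : C) (a b : int) : vec2 :=
  fun i =>
    if b == a + 1 then (if i == ord0 then 1 else alpha * (u - a%:~R - t))
    else if b == a - 1 then (if i == ord0 then 1 else alpha * (u + a%:~R + s))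
    else 0.

Definition admissible (n : nat) (a b : int) : bool :=
  [exists j : 'I_n.+1, b == a - n%:Z + 2 * (j : nat)%:Z].

(* A canonical admissible path c_0 = a, ..., c_n = b with |c_{k+1}-c_k| = 1:
   first m := (b - a + n)/2 up-steps, then n - m down-steps. *)
Definition fpath (n : nat) (a b : int) (k : nat) : int :=
  let m := (absz (b - a + n%:Z))./2 in
  if (k <= m)%N then a + k%:Z else a + (2 * m)%:Z - k%:Z.

(* psi^{(n)}(u)^a_b
   = Pi (psi1(u+n-1)^{c_0}_{c_1} (x) ... (x) psi1(u)^{c_{n-1}}_{c_n}),
   and 0 if b - a is not in {-n, -n+2, ..., n}. *)
Definition psin (alpha s t : C) (n : nat) (u : C) (a b : int) : tensor n :=
  if admissible n a b then
    symmetrizer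
      (pure_tensor (fun k : 'I_n =>
         psi1 alpha s t (u + (n.-1 - k)%:R) (fpath n a b k) (fpath n a b k.+1)))
  else fun _ => 0.

Definition lin_indep (n m : nat) (v : 'I_m -> tensor n) : Prop :=
  forall lam : 'I_m -> C,
    (forall idx, \sum_(j < m) lam j * v j idx = 0) -> forall j, lam j = 0.

End Fused.

Arguments psin {R} alpha s t n u a b _.

(* Main.v *)
Require Import Defs.
From mathcomp Require Import all_boot all_algebra all_fingroup complex reals.
From mathcomp Require Import zify ring.
Import GRing.Theory Num.Theory.
Local Open Scope ring_scope.

Section Aux.
Variable R : realType.
Local Notation C := (R[i]).

Lemma key (n : nat) (f g : nat -> C) (lam : 'I_n.+1 -> C) :
  (forall i i', f i != g i') -> (forall i m, (i < m)%N -> g i != g m) ->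
  (forall x, \sum_(j < n.+1) lam j * ((\prod_(0 <= i < j) (x - f i)) *
        \prod_(0 <= i < n - j) (x - g i)) = 0) ->
  forall j, lam j = 0.
Proof.
move=> hfg hg hsum.
suff H : forall k (j : 'I_n.+1), (n < j + k)%N -> lam j = 0.
  by move=> j; apply: (H n.+1); lia.
elim=> [|k IH] j hj; first by have := ltn_ord j; lia.
case: (ltnP n (j + k)) => h; first exact: IH.
have ejk : (n - j = k)%N by have := ltn_ord j; lia.
have := hsum (g k).
rewrite (bigD1 j) //= [X in _ + X]big1 ?addr0.
  move/eqP; rewrite mulf_eq0 => /orP[/eqP //|].
  rewrite mulf_eq0 => /orP[] /=; rewrite prodf_seq_eq0 => /hasP [] i.
    rewrite mem_index_iota => hi /=; rewrite subr_eq0 => /eqP e.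
    by move: (hfg i k); rewrite e eqxx.
  rewrite mem_index_iota => hi /=; rewrite subr_eq0 => /eqP e.
  rewrite ejk in hi; by move: (hg i k); rewrite e eqxx; move=> /(_ (proj2 (andP hi))).
move=> j' hj'.
case: (ltnP j j') => hjj.
  by rewrite IH ?mul0r //; lia.
have hk : (k < n - j')%N.
  have : (nat_of_ord j' != j) by [].
  lia.
rewrite [X in _ * (_ * X)](big_cat_nat (n:=k)) //=; last by lia.
rewrite (big_ltn hk) subrr mul0r mulr0 mulr0.
by rewrite mulr0.
Qed.

Definition wt (x : C) : vec2 R := fun i => if i == ord0 then x else 1.
Definition Ev {n : nat} (x : C) (T : tensor R n) :=
  \sum_(idx : {ffun 'I_n -> 'I_2}) T idx * \prod_(k < n) wt x (idx k).

Lemma Ev_sym n (x : C) (T : tensor R n) : Ev x (symmetrizer T) = Ev x T.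
Proof.
rewrite /Ev /symmetrizer.
under eq_bigr do rewrite -mulrA mulr_suml.
rewrite -mulr_sumr exchange_big /=.
have H : forall sigma : 'S_n, \sum_(idx : {ffun 'I_n -> 'I_2})
    T [ffun k => idx (sigma k)] * \prod_(k < n) wt x (idx k) =
    \sum_(idx : {ffun 'I_n -> 'I_2}) T idx * \prod_(k < n) wt x (idx k).
  move=> sigma.
  rewrite (reindex_inj (h := fun idx : {ffun 'I_n -> 'I_2} => [ffun k => idx ((sigma^-1)%g k)])).
    apply: eq_bigr => idx _.
    have -> : [ffun k => [ffun k0 => idx ((sigma^-1)%g k0)] (sigma k)] = idx.
      by apply/ffunP => k; rewrite !ffunE permK.
    congr (_ * _).
    rewrite (reindex_inj (perm_inj (s := sigma))) /=.
    by apply: eq_bigr => k _; rewrite ffunE permK.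
  move=> i1 i2 /ffunP e; apply/ffunP => k.
  by move: (e (sigma k)); rewrite !ffunE permK.
under eq_bigr do rewrite H.
rewrite sumr_const card_Sn.
set Y := (\sum_idx _).
have -> : Y *+ n`! = n`!%:R * Y by rewrite mulr_natl.
rewrite mulrA mulVf ?mul1r //.
by rewrite pnatr_eq0 -lt0n fact_gt0.
Qed.

Lemma Ev_pure n (x : C) (v : 'I_n -> vec2 R) :
  Ev x (pure_tensor v) = \prod_(k < n) (v k ord0 * x + v k ord_max).
Proof.
rewrite /Ev /pure_tensor.
under eq_bigr do rewrite -big_split /=.
rewrite -(bigA_distr_bigA (fun k i => v k i * wt x i)) /=.
apply: eq_bigr => k _.
rewrite big_ord_recr big_ord1 /= /wt /= mulr1; congr (v k _ * x + _); exact/val_inj.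
Qed.

Lemma Ev_lin n m (v : 'I_m -> tensor R n) (lam : 'I_m -> C) (x : C) :
  (forall idx, \sum_(j < m) lam j * v j idx = 0) ->
  \sum_(j < m) lam j * Ev x (v j) = 0.
Proof.
move=> H; under eq_bigr do rewrite /Ev mulr_sumr.
rewrite exchange_big /=; apply: big1 => idx _.
under eq_bigr do rewrite mulrA.
by rewrite -mulr_suml H mul0r.
Qed.

Variables (alpha s t : C).

Lemma fac_up u (a b : int) (x : C) : b = a + 1 ->
  psi1 alpha s t u a b ord0 * x + psi1 alpha s t u a b ord_max =
  x + alpha * (u - a%:~R - t).
Proof. move=> ->; rewrite /psi1 eqxx /=. congr (_ + _); exact: mul1r. Qed.

Lemma fac_down u (a b : int) (x : C) : b = a - 1 ->
  psi1 alpha s t u a b ord0 * x + psi1 alpha s t u a b ord_max =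
  x + alpha * (u + a%:~R + s).
Proof.
move=> ->; rewrite /psi1 eqxx /=.
have -> : (a - 1 == a + 1) = false by apply/negbTE; lia.
rewrite eqxx; congr (_ + _); exact: mul1r.
Qed.

Lemma fpath_up n (a b : int) (m k : nat) : b = a - n%:Z + 2 * m%:Z -> (m <= n)%N ->
  (k <= m)%N -> Defs.fpath n a b k = a + k%:Z.
Proof.
move=> -> hm hk; rewrite /Defs.fpath.
have -> : (absz (a - n%:Z + 2 * m%:Z - a + n%:Z))./2 = m by lia.
by rewrite hk.
Qed.

Lemma fpath_down n (a b : int) (m k : nat) : b = a - n%:Z + 2 * m%:Z -> (m <= n)%N ->
  (m <= k)%N -> Defs.fpath n a b k = a + (2 * m)%:Z - k%:Z.
Proof.
move=> -> hm hk; rewrite /Defs.fpath.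
have -> : (absz (a - n%:Z + 2 * m%:Z - a + n%:Z))./2 = m by lia.
case: ifP => h //; lia.
Qed.

Lemma adm n (a b : int) (m : nat) : b = a - n%:Z + 2 * m%:Z -> (m <= n)%N ->
  admissible n a b.
Proof.
move=> -> hm; apply/existsP.
have hm' : (m < n.+1)%N by lia.
by exists (Ordinal hm').
Qed.

Lemma Ev_psin n u (a b : int) (m : nat) (x : C) :
  b = a - n%:Z + 2 * m%:Z -> (m <= n)%N ->
  Ev x (psin alpha s t n u a b) =
  \prod_(0 <= k < m) (x + alpha * ((u + (n.-1 - k)%:R) - (a + k%:Z)%:~R - t)) *
  \prod_(0 <= i < n - m)
     (x + alpha * ((u + (n.-1 - (i + m))%:R) + (a + (2 * m)%:Z - (i + m)%:Z)%:~R + s)).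
Proof.
move=> hb hm; rewrite /psin (adm _ _ _ _ hb hm) Ev_sym Ev_pure.
rewrite -(big_mkord xpredT (fun k => psi1 alpha s t (u + (n.-1 - k)%:R) (Defs.fpath n a b k) (Defs.fpath n a b k.+1) ord0 * x + psi1 alpha s t (u + (n.-1 - k)%:R) (Defs.fpath n a b k) (Defs.fpath n a b k.+1) ord_max)).
rewrite (big_cat_nat (n := m)) //=.
congr (_ * _).
  apply: eq_big_nat => k /andP [_ hk].
  rewrite (fpath_up _ _ _ _ k hb hm) ?(ltnW hk) // (fpath_up _ _ _ _ k.+1 hb hm) //.
  rewrite fac_up //; lia.
rewrite -{1}(add0n m) big_addn.
apply: eq_big_nat => i /andP [_ hi].
rewrite (fpath_down _ _ _ _ (i + m) hb hm) ?leq_addl // (fpath_down _ _ _ _ (i + m).+1 hb hm) ?leqW ?leq_addl //.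
rewrite fac_down //; lia.
Qed.
End Aux.

Theorem proposition6 (R : realType) (alpha s t : R[i]) :
  alpha != 0 ->
  (forall z : int, (s + t) / 2 != z%:~R) ->
  forall (n : nat), (0 < n)%N ->
  forall (u : R[i]) (a c : int),
    lin_indep (fun j : 'I_n.+1 => psin alpha s t n u a (a - n%:Z + 2 * (j : nat)%:Z))
    /\ lin_indep (fun j : 'I_n.+1 => psin alpha s t n u (c - n%:Z + 2 * (j : nat)%:Z) c).
Proof.
move=> ha hst n hn u a c; split => lam H.
- pose f i := - (alpha * (u + (n.-1)%:R - a%:~R - t - 2 * i%:R)).
  pose g i := - (alpha * (u + (n.-1)%:R + a%:~R + s - 2 * i%:R)).
  move=> j0; apply: (key _ _ f g).
  + move=> i i'; apply/negP => /eqP /oppr_inj /(mulfI ha) e.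
    have h : s + t - 2 * (- a - i%:Z + i'%:Z)%:~R =
       (u + (n.-1)%:R + a%:~R + s - 2 * i'%:R) - (u + (n.-1)%:R - a%:~R - t - 2 * i%:R).
      rewrite !intrD !intrN; ring.
    move: h; rewrite e subrr => /eqP; rewrite subr_eq0 => /eqP h.
    move: (hst (- a - i%:Z + i'%:Z)); rewrite h mulrC mulKf ?eqxx //.
    by rewrite pnatr_eq0.
  + move=> i m him; apply/negP => /eqP /oppr_inj /(mulfI ha) e.
    have h : (2 * m)%:R - (2 * i)%:R =
       (u + (n.-1)%:R + a%:~R + s - 2 * i%:R) - (u + (n.-1)%:R + a%:~R + s - 2 * m%:R) :> R[i].
      rewrite !natrM; ring.
    move: h; rewrite e subrr => /eqP; rewrite subr_eq0 eqr_nat => /eqP h.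
    lia.
  + move=> x; rewrite -[RHS](Ev_lin _ _ _ _ lam x H); apply: eq_bigr => j _.
    have hj := ltn_ord j.
    have hjn : (j <= n)%N by lia.
    rewrite (Ev_psin _ _ _ _ _ u a _ j x erefl hjn).
    congr (_ * (_ * _)); apply: eq_big_nat => k /andP [_ hk].
      rewrite /f natrB; last by lia.
      rewrite intrD; ring.
    rewrite /g natrB; last by lia.
    rewrite intrB intrD; ring.
- move=> j0.
  pose f i := - (alpha * (u + c%:~R + s + 1 + 2 * i%:R)).
  pose g i := - (alpha * (u + 1 - c%:~R - t + 2 * i%:R)).
  apply: (key _ _ f g).
  + move=> i i'; apply/negP => /eqP /oppr_inj /(mulfI ha) e.
    have h : s + t - 2 * (- c - i%:Z + i'%:Z)%:~R =
       (u + c%:~R + s + 1 + 2 * i%:R) - (u + 1 - c%:~R - t + 2 * i'%:R).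
      rewrite !intrD !intrN; ring.
    move: h; rewrite e subrr => /eqP; rewrite subr_eq0 => /eqP h.
    move: (hst (- c - i%:Z + i'%:Z)); rewrite h mulrC mulKf ?eqxx //.
    by rewrite pnatr_eq0.
  + move=> i m him; apply/negP => /eqP /oppr_inj /(mulfI ha) e.
    have h : (2 * m)%:R - (2 * i)%:R =
       (u + 1 - c%:~R - t + 2 * m%:R) - (u + 1 - c%:~R - t + 2 * i%:R) :> R[i].
      rewrite !natrM; ring.
    move: h; rewrite -e subrr => /eqP; rewrite subr_eq0 eqr_nat => /eqP h.
    lia.
  + move=> x; rewrite -[RHS](Ev_lin _ _ _ _ lam x H); apply: eq_bigr => j _.
    have hj := ltn_ord j.
    have hjn : (n - j <= n)%N by lia.
    have hb : c = (c - n%:Z + 2 * (j : nat)%:Z) - n%:Z + 2 * (n - j)%N%:Z by lia.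
    rewrite (Ev_psin _ _ _ _ _ u _ _ _ x hb hjn) [X in _ = _ * X]mulrC.
    have -> : (n - (n - j) = j)%N by lia.
    congr (_ * (_ * _)).
      rewrite big_nat_rev; apply: eq_big_nat => i /andP [_ hi].
      rewrite /f add0n.
      have -> : (n.-1 - (i + (n - j)) = j - i.+1)%N by lia.
      have -> : (c - n%:Z + 2 * (j : nat)%:Z + (2 * (n - j))%N%:Z - (i + (n - j))%N%:Z)
          = c + (j : nat)%:Z - i%:Z by lia.
      rewrite natrB // intrB intrD; ring.
    rewrite [RHS]big_nat_rev; apply: eq_big_nat => i /andP [_ hi].
    rewrite /g add0n.
    have -> : (n.-1 - (n - j - i.+1) = j + i)%N by lia.
    have -> : (c - n%:Z + 2 * (j : nat)%:Z + (n - j - i.+1)%N%:Z)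
          = c + (j : nat)%:Z - i%:Z - 1 by lia.
    rewrite natrD !intrB intrD; ring.
Qed.
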